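(* Let $G=SU(3)\rtimes\mathbb{Z}_2$ and write $H^*(BG;\mathbb{Z}_2)=\mathbb{Z}_2[y_1,y_4,y_6]$ with $\deg y_i=i$ and $Sq^1(y_1)=y_1^2$, $Sq^1(y_4)=0$, $Sq^1(y_6)=y_1y_6$. Then the $Sq^1$-homology is $$H(H^*(BG;\mathbb{Z}_2),Sq^1)\cong\mathbb{Z}_2[y_4,y_6^2].$$
   Context: $\mathbb{Z}_2$ acts on $SU(3)$ by complex conjugation. The Steenrod square $Sq^1$ satisfies $Sq^1\circ Sq^1=0$ and acts as a derivation, so it is a differential on $H^*(BG;\mathbb{Z}_2)$; $H(\,\cdot\,,Sq^1)$ denotes its homology. Such generators $y_1,y_4,y_6$ exist (with $y_4,y_6$ restricting to the mod 2 reductions of the Chern classes $c_2,c_3$ on $BSU(3)$). *)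

(* Defs.v *)
From HB Require Import structures.
From mathcomp Require Import all_boot all_order all_algebra.
From mathcomp Require Import mpoly.
Set Implicit Arguments. Unset Strict Implicit. Unset Printing Implicit Defensive.
Import GRing.Theory.
Local Open Scope ring_scope.

Definition A := {mpoly 'F_2[3]}.

Definition i1 : 'I_3 := @Ordinal 3 0 isT.
Definition i4 : 'I_3 := @Ordinal 3 1 isT.
Definition i6 : 'I_3 := @Ordinal 3 2 isT.

Definition y1 : A := 'X_i1.
Definition y4 : A := 'X_i4.
Definition y6 : A := 'X_i6.

(* The target polynomial ring Z_2[a, b] with a := y_4, b := y_6^2. *)
Definition B := {mpoly 'F_2[2]}.
Definition j0 : 'I_2 := @Ordinal 2 0 isT.

Definition phi (q : B) : A :=
  comp_mpoly [tuple y4; y6 ^+ 2] q.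

(* Main.v *)
Require Import Defs.
From HB Require Import structures.
From mathcomp Require Import all_boot all_order all_algebra.
From mathcomp Require Import mpoly.
Import GRing.Theory.
Local Open Scope ring_scope.
From mathcomp Require Import ring.
Import GRing.Theory.
Local Open Scope ring_scope.

Lemma two0 : (2%:R : 'F_2) = 0. Proof. by apply/eqP. Qed.
Lemma addxx (x : A) : x + x = 0.
Proof. by rewrite -mulr2n -mulr_natr -mpolyC_nat two0 mulr0. Qed.
Lemma F2cases (c : 'F_2) : c = 0 \/ c = 1.
Proof. by case: c => [[|[|]]] //= ?; [left|right]; apply/val_inj. Qed.
Lemma mulnF2 (x : A) k : x *+ k = if odd k then x else 0.
Proof.
elim: k => [|k IH]; first by [].
rewrite mulrS IH /=; case: (odd k) => /=; by rewrite ?addxx ?addr0.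
Qed.
Lemma mulnF2c (x : 'F_2) k : x *+ k = if odd k then x else 0.
Proof.
elim: k => [|k IH]; first by [].
rewrite mulrS IH /=; case: (odd k) => /=; rewrite ?addr0 //.
by case: (F2cases x) => ->; apply/eqP.
Qed.

Definition D (p : A) : A := 'X_i1 * ('X_i1 * p^`M(i1) + 'X_i6 * p^`M(i6)).

Lemma coefXU (i : 'I_3) (r : A) (k : 'X_{1..3}) : ('X_i * r)@_(k + U_(i))%MM = r@_k.
Proof. by rewrite mulrC addmC mcoeffMX. Qed.

Lemma coefXU0 (i : 'I_3) (r : A) (n : 'X_{1..3}) : n i = 0%N -> ('X_i * r)@_n = 0.
Proof.
move=> h; apply: memN_msupp_eq0; rewrite mulrC (perm_mem (msuppMX _ _)).
apply/negP => /mapP [m' _ e]; move: h; rewrite e mnmDE mnm1E eqxx. by [].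
Qed.

Lemma euler (i : 'I_3) (p : A) (k : 'X_{1..3}) : ('X_i * p^`M(i))@_k = p@_k *+ k i.
Proof.
case e: (k i) => [|t]; first by rewrite coefXU0.
have -> : k = ((k - U_(i)) + U_(i))%MM.
  by rewrite submK // lep1mP e.
rewrite coefXU mcoeff_deriv; congr (_ *+ _).
by rewrite mnmBE mnm1E eqxx e subn1.
Qed.
Definition isder (e : A -> A) :=
  (forall p q, e (p + q) = e p + e q) /\ (forall p q, e (p * q) = e p * q + p * e q).

Lemma der0 e : isder e -> e 0 = 0.
Proof. move=> [ha _]; have := ha 0 0; rewrite addr0 => h.
by apply: (addrI (e 0)); rewrite addr0 -h. Qed.
Lemma der1 e : isder e -> e 1 = 0.
Proof. move=> [_ hm]; have := hm 1 1; rewrite !mulr1 mul1r => h.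
by apply: (addrI (e 1)); rewrite addr0 -h. Qed.

Lemma deriv_uniq (e1 e2 : A -> A) : isder e1 -> isder e2 ->
  (forall i, e1 'X_i = e2 'X_i) -> forall p, e1 p = e2 p.
Proof.
move=> h1 h2 hX.
have hM : forall x y, e1 x = e2 x -> e1 y = e2 y -> e1 (x * y) = e2 (x * y).
  by move=> x y ex ey; rewrite h1.2 h2.2 ex ey.
have hXm : forall m, e1 'X_[m] = e2 'X_[m].
  move=> m; rewrite mpolyXE_id; elim/big_ind: _ => //.
    by rewrite der1 // der1.
  move=> i _; elim: (m i) => [|k IH]; first by rewrite !expr0 der1 // der1.
  by rewrite exprS hM.
elim/mpolyind => [|c m p _ _ IH]; first by rewrite !der0.
rewrite h1.1 h2.1 IH; case: (F2cases c) => ->.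
  by rewrite !scale0r !der0.
by rewrite !scale1r hXm.
Qed.

Lemma Xder (i : 'I_3) (m : 'X_{1..3}) : 'X_i * ('X_[m] : A)^`M(i) = (m i)%:R *: 'X_[m].
Proof.
rewrite mderivX -scalerAr -mpolyXD.
case e: (m i) => [|t]; first by rewrite !scale0r.
by rewrite addmC submK // lep1mP e.
Qed.

Lemma DX (m : 'X_{1..3}) : D 'X_[m] = (m i1 + m i6)%:R *: ('X_i1 * 'X_[m]).
Proof. by rewrite /D !Xder -scalerDl natrD scalerAr. Qed.

Lemma isder_D : isder D.
Proof.
split=> p q; rewrite /D.
  rewrite !mderivD. ring.
rewrite !mderivM. ring.
Qed.

Lemma DXU (j : 'I_3) : D 'X_j = ((U_(j))%MM i1 + (U_(j))%MM i6)%:R *: ('X_i1 * 'X_j).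
Proof. exact: DX. Qed.

Definition j1 : 'I_2 := @Ordinal 2 1 isT.
Definition fm (m : 'X_{1..2}) : 'X_{1..3} := (U_(i4) *+ m j0 + U_(i6) *+ (m j1).*2)%MM.

Lemma fm1 m : fm m i1 = 0%N.
Proof. by rewrite /fm mnmDE !mulmnE !mnm1E. Qed.
Lemma fm4 m : fm m i4 = m j0.
Proof. by rewrite /fm mnmDE !mulmnE !mnm1E /= mul1n mul0n addn0. Qed.
Lemma fm6 m : fm m i6 = (m j1).*2.
Proof. by rewrite /fm mnmDE !mulmnE !mnm1E /= mul1n mul0n add0n. Qed.

Lemma fm_inj : injective fm.
Proof.
move=> a b e; apply/mnmP; case=> [[|[|//]]] Hi.
- have -> : Ordinal Hi = j0 by apply/val_inj.
  by rewrite -!fm4 e.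
- have -> : Ordinal Hi = j1 by apply/val_inj.
  by apply: double_inj; rewrite -!fm6 e.
Qed.

Lemma phiX m : phi 'X_[m] = 'X_[fm m].
Proof.
rewrite /phi comp_mpolyX !big_ord_recl big_ord0 mulr1 !(tnth_nth 0) /=.
rewrite /fm mpolyXD -!mpolyXn -/y4 -/y6 -mul2n exprM.
have -> : (ord0 : 'I_2) = j0 by apply/val_inj.
by have -> : (lift j0 (ord0 : 'I_1)) = j1 by apply/val_inj.
Qed.

Lemma phi_coef q m : (phi q)@_(fm m) = q@_m.
Proof.
elim/mpolyind: q => [|c m' p _ _ IH]; first by rewrite /phi comp_mpoly0 !mcoeff0.
rewrite /phi comp_mpolyD comp_mpolyZ -/(phi _) -/(phi p) phiX.
rewrite !mcoeffD !mcoeffZ IH !mcoeffX; congr (c * _ + _).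
by rewrite (inj_eq fm_inj).
Qed.

Lemma natF2 k : (k%:R : 'F_2) = if odd k then 1 else 0.
Proof. by rewrite -mulnF2c. Qed.

Lemma D_phi q : D (phi q) = 0.
Proof.
elim/mpolyind: q => [|c m p _ _ IH]; first by rewrite /phi comp_mpoly0 (@der0 _ isder_D).
rewrite /phi comp_mpolyD comp_mpolyZ -/(phi _) -/(phi p) phiX (proj1 isder_D) IH addr0.
case: (F2cases c) => ->; first by rewrite scale0r (@der0 _ isder_D).
by rewrite scale1r DX fm1 fm6 add0n natF2 odd_double scale0r.
Qed.

Lemma phiDZ c (x q : B) : phi (c *: x + q) = c *: phi x + phi q.
Proof. by rewrite /phi comp_mpolyD comp_mpolyZ. Qed.

Lemma coefD (p : A) (k : 'X_{1..3}) : (D p)@_(k + U_(i1))%MM = p@_k *+ (k i1 + k i6).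
Proof. by rewrite /D coefXU mcoeffD !euler mulrnDr. Qed.

Lemma coefD0 (p : A) (n : 'X_{1..3}) : n i1 = 0%N -> (D p)@_n = 0.
Proof. exact: coefXU0. Qed.

Definition oddsupp (r : A) := forall k : 'X_{1..3}, r@_k != 0 -> odd (k i1 + k i6).

Lemma decomp (z : A) : exists q w r, z = phi q + D w + r /\ oddsupp r.
Proof.
elim/mpolyind: z => [|c m p _ _ [q [w [r [-> hr]]]]].
  exists 0, 0, 0; split; last by move=> k; rewrite mcoeff0 eqxx.
  by rewrite /phi comp_mpoly0 (@der0 _ isder_D) !addr0.
case h: (odd (m i1 + m i6)).
  exists q, w, (c *: 'X_[m] + r); split; first by ring.
  move=> k; rewrite mcoeffD mcoeffZ mcoeffX.
  set b := (_ == k); have : b = (m == k) by []. case: (eqVneq m k) => [<- -> //|ne hb]. have -> : b = false by rewrite hb; apply/negbTE. by rewrite mulr0 add0r; apply: hr.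
case e1: (m i1) => [|t].
  pose g : 'X_{1..2} := (U_(j0) *+ m i4 + U_(j1) *+ (m i6)./2)%MM.
  have hg : fm g = m.
    apply/mnmP; case=> [[|[|[|//]]]] Hi.
    - have -> : Ordinal Hi = i1 by apply/val_inj.
      by rewrite fm1 e1.
    - have -> : Ordinal Hi = i4 by apply/val_inj.
      by rewrite fm4 /g mnmDE !mulmnE !mnm1E /= mul1n mul0n addn0.
    - have -> : Ordinal Hi = i6 by apply/val_inj.
      rewrite fm6 /g mnmDE !mulmnE !mnm1E /= mul1n mul0n add0n halfK.
      by move: h; rewrite e1 add0n => ->; rewrite subn0.
  exists (c *: 'X_[g] + q), w, r; split => //.
  rewrite phiDZ phiX hg; ring.
pose m' := (m - U_(i1))%MM.
have hm : (U_(i1) + m')%MM = m by rewrite addmC submK // lep1mP e1.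
have hD : D (c *: 'X_[m']) = c *: 'X_[m].
  case: (F2cases c) => ->; first by rewrite !scale0r (@der0 _ isder_D).
  rewrite !scale1r DX -mpolyXD hm natF2.
  have -> : odd (m' i1 + m' i6).
    move: h; rewrite /m' !mnmBE !mnm1E /= e1 subn0 subSS subn0 addSn /=.
    by case: odd.
  by rewrite scale1r.
exists q, (c *: 'X_[m'] + w), r; split => //.
rewrite (proj1 isder_D) hD; ring.
Qed.

Theorem lemma6p6 (d : A -> A)
  (d_add : forall p q : A, d (p + q) = d p + d q)
  (d_leibniz : forall p q : A, d (p * q) = d p * q + p * d q)
  (d_y1 : d y1 = y1 ^+ 2)
  (d_y4 : d y4 = 0)
  (d_y6 : d y6 = y1 * y6) :
  [/\ forall q : B, d (phi q) = 0,
      forall z : A, d z = 0 -> exists (q : B) (w : A), z = phi q + d w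
    & forall (q : B) (w : A), phi q = d w -> q = 0].
Proof.
have isder_d : isder d by split.
have dD : forall p, d p = D p.
apply: deriv_uniq; [exact: isder_d|exact: isder_D|].
case=> [[|[|[|//]]]] Hi; rewrite DXU mnm1E mnm1E.
- have -> : Ordinal Hi = i1 by apply/val_inj.
  by rewrite d_y1 /= scale1r expr2.
- have -> : Ordinal Hi = i4 by apply/val_inj.
  by rewrite d_y4 /= scale0r.
- have -> : Ordinal Hi = i6 by apply/val_inj.
  by rewrite d_y6 /= scale1r.
have dd : forall p, d (d p) = 0.
  move=> p.
have h : isder (fun p => d (d p)).
  split=> a b; first by rewrite !d_add.
  rewrite !d_leibniz !d_add !d_leibniz.
  by rewrite -addrA (addrA (d a * d b)) addxx add0r.
have h0 : isder (fun _ => 0) by split=> *; rewrite ?mulr0 ?mul0r ?addr0.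
suff hX : forall i, d (d 'X_i) = 0 by have := @deriv_uniq _ _ h h0 hX p.
case=> [[|[|[|//]]]] Hi.
- have -> : Ordinal Hi = i1 by apply/val_inj.
  by rewrite -/y1 d_y1 expr2 d_leibniz d_y1 mulrC addxx.
- have -> : Ordinal Hi = i4 by apply/val_inj.
  by rewrite -/y4 d_y4 der0.
- have -> : Ordinal Hi = i6 by apply/val_inj.
  rewrite -/y6 d_y6 d_leibniz d_y1 d_y6 expr2 mulrA addxx //.
split.
- by move=> q; rewrite dD D_phi.
- move=> z hz; have [q [w [r [ez hr]]]] := decomp z.
  have hDr : D r = 0.
    move: hz; rewrite ez !d_add -(dD w) dd.
    have -> : d (phi q) = 0 by rewrite dD D_phi.
    by rewrite !add0r dD.
  rewrite ez; have -> : r = 0.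
    apply/mpolyP => k; rewrite mcoeff0.
    case: (eqVneq (r@_k) 0) => // nz.
    have := coefD r k; rewrite hDr mcoeff0 mulnF2c (hr k nz) => <- //.
  by exists q, w; rewrite addr0 dD.
- move=> q w h; apply/mpolyP => m.
  by rewrite mcoeff0 -phi_coef h dD coefD0 // fm1.
Qed.
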